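(* Let $R$ be a commutative ring with identity and $M$ a non-zero comultiplication $R$-module with $G'(M)$ non-null. Then the domination number satisfies $\gamma(G'(M))\le 2$. In particular, if $|\mathrm{Min}(M)|<\infty$, then $\gamma(G'(M))=2$.
   Context: An $R$-module $M$ is a comultiplication module if for every submodule $N$ of $M$ there is an ideal $I$ of $R$ with $N=\mathrm{Ann}_M(I)$. A submodule $N$ of $M$ is large if $N\cap L\neq 0$ for every non-zero submodule $L$ of $M$. $\mathrm{Min}(M)$ is the set of minimal submodules of $M$. The large sum graph $G'(M)$ has as vertex set the set of all non-zero non-large submodules of $M$, and two distinct vertices $N,K$ are adjacent iff $N+K$ is non-large in $M$. A set $S$ of vertices is dominating if every vertex lies in $S$ or is adjacent to a vertex of $S$; $\gamma(G)$ is the minimum cardinality of a dominating set. *)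

(* Defs.v *)
From HB Require Import structures.
From Stdlib Require Import List.
From mathcomp Require Import all_boot all_order all_algebra.
Set Implicit Arguments. Unset Strict Implicit. Unset Printing Implicit Defensive.
Import GRing.Theory.
Local Open Scope ring_scope.

Section ModuleDefs.
Variables (R : comPzRingType) (M : lmodType R).

Definition msub := M -> Prop.

Definition is_submodule (N : msub) : Prop :=
  [/\ N 0, (forall x y, N x -> N y -> N (x + y)) & (forall (r : R) x, N x -> N (r *: x))].

Definition is_ideal (I : R -> Prop) : Prop :=
  [/\ I 0, (forall a b, I a -> I b -> I (a + b)) & (forall r a, I a -> I (r * a))].

Definition msub_eq (N K : msub) : Prop := forall x, N x <-> K x.
Definition msub_le (N K : msub) : Prop := forall x, N x -> K x.

Definition AnnM (I : R -> Prop) : msub := fun m => forall r, I r -> r *: m = 0.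

Definition comultiplication_module : Prop :=
  forall N, is_submodule N -> exists I, is_ideal I /\ msub_eq N (AnnM I).

Definition zero_msub (N : msub) : Prop := forall x, N x -> x = 0.

Definition nonzero_module : Prop := exists x : M, x <> 0.

Definition msum (N K : msub) : msub := fun x => exists n k, N n /\ K k /\ x = n + k.

Definition large (N : msub) : Prop :=
  forall L, is_submodule L -> ~ zero_msub L -> exists x, x <> 0 /\ N x /\ L x.

Definition minimal_submodule (N : msub) : Prop :=
  [/\ is_submodule N, ~ zero_msub N &
      forall K, is_submodule K -> msub_le K N -> zero_msub K \/ msub_eq K N].

(* Min(M) is finite: finitely many minimal submodules up to equality *)
Definition Min_finite : Prop :=
  exists l : seq msub, forall N, minimal_submodule N -> exists2 K, List.In K l & msub_eq N K.

Definition lsg_vertex (N : msub) : Prop :=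
  [/\ is_submodule N, ~ zero_msub N & ~ large N].

Definition lsg_adj (N K : msub) : Prop :=
  [/\ lsg_vertex N, lsg_vertex K, ~ msub_eq N K & ~ large (msum N K)].

Definition lsg_nonnull : Prop := exists N K, lsg_adj N K.

(* S (given as a list, possibly with repetitions) is a dominating set of G'(M) *)
Definition lsg_dominating (S : seq msub) : Prop :=
  (forall N, List.In N S -> lsg_vertex N) /\
  (forall V, lsg_vertex V -> exists2 N, List.In N S & (msub_eq V N \/ lsg_adj V N)).

Definition lsg_gamma_le (k : nat) : Prop :=
  exists S, lsg_dominating S /\ (size S <= k)%N.

Definition lsg_gamma_eq (k : nat) : Prop :=
  lsg_gamma_le k /\ forall S, lsg_dominating S -> (k <= size S)%N.

End ModuleDefs.

(* Main.v *)
Require Import Defs.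
From mathcomp Require Import all_boot all_order all_algebra.
From Stdlib Require Import List.
From mathcomp Require Import boolp classical_sets.
Set Implicit Arguments. Unset Strict Implicit. Unset Printing Implicit Defensive.

Lemma zorn_max (T : Type) (Q : (T -> Prop) -> Prop) (A0 : T -> Prop) :
  Q A0 ->
  (forall F : (T -> Prop) -> Prop, (forall X, F X -> Q X /\ (forall t, A0 t -> X t)) ->
     (forall X Y, F X -> F Y -> (forall t, X t -> Y t) \/ (forall t, Y t -> X t)) ->
     (exists X, F X) -> Q (fun t => exists2 X, F X & X t)) ->
  exists A, [/\ Q A, (forall t, A0 t -> A t) &
     forall B, (forall t, A t -> B t) -> Q B -> forall t, B t -> A t].
Proof.
move=> QA0 Hch.
pose P := fun X : T -> Prop => (forall t, X t -> A0 t) \/ (Q X /\ forall t, A0 t -> X t).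
have [A [PA Amax]] : exists A, P A /\ forall B, (A `<` B)%classic -> ~ P B.
  apply: Zorn_bigcup => F FP Ftot.
  case: (pselect (exists X, F X /\ (Q X /\ forall t, A0 t -> X t))) => [[X0 [FX0 HX0]]|Hno].
  - right.
    pose F' := fun X => F X /\ (Q X /\ forall t, A0 t -> X t).
    have E : (\bigcup_(X in F) X)%classic = (fun t => exists2 X, F' X & X t).
      apply: funext => t; apply: propext; split.
      + case=> X FX Xt; case: (FP X FX) => [XA0|HX].
        * by exists X0 => //; apply: HX0.2; apply: XA0.
        * by exists X.
      + by case=> X [FX _] Xt; exists X.
    rewrite E; split.
    + apply: Hch; first by move=> X [].
      * by move=> X Y [FX _] [FY _]; apply: Ftot.
      * by exists X0.
    + by move=> t /(HX0.2 t) At; exists X0.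
  - left => t [X FX Xt]; case: (FP X FX) => [|HX]; first by apply.
    by exfalso; apply: Hno; exists X.
have HA : Q A /\ forall t, A0 t -> A t.
  case: PA => [AA0|//].
  have A0A : forall t, A0 t -> A t.
    move=> t A0t; apply: contrapT => nAt.
    apply: (Amax A0); last by right.
    split => // H; by apply: nAt; apply: H.
  have -> : A = A0 by apply: funext => t; apply: propext; split; [apply: AA0|apply: A0A].
  by [].
case: HA => QA A0A; exists A; split => // B AB QB t Bt.
apply: contrapT => nAt; apply: (Amax B); last by right; split => // s /A0A /AB.
by split => // H; apply: nAt; apply: H.
Qed.

Section Helpers.
Import GRing.Theory.
Local Open Scope ring_scope.
Variables (R : comPzRingType) (M : lmodType R).

Lemma ex_nz (N : msub M) : ~ zero_msub N -> exists x, N x /\ x <> 0.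
Proof.
move=> nz; apply: contrapT => H; apply: nz => x Nx; apply: contrapT => nx.
by apply: H; exists x.
Qed.

Lemma large_mono (N K : msub M) : large N -> msub_le N K -> large K.
Proof.
move=> lN NK L sL nzL; have [x [nx [Nx Lx]]] := lN L sL nzL.
by exists x; split => //; split => //; apply: NK.
Qed.

Lemma msum_sub (N K : msub M) : is_submodule N -> is_submodule K -> is_submodule (msum N K).
Proof.
case=> N0 ND NZ [K0 KD KZ]; split.
- by exists 0, 0; rewrite addr0.
- move=> x y [n [k [Nn [Kk ->]]]] [n' [k' [Nn' [Kk' ->]]]].
  by exists (n + n'), (k + k'); split; [exact: ND|split; [exact: KD|rewrite addrACA]].
- move=> r x [n [k [Nn [Kk ->]]]]; exists (r *: n), (r *: k).
  by split; [exact: NZ|split; [exact: KZ|rewrite scalerDr]].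
Qed.

Lemma not_large (N : msub M) : ~ large N ->
  exists L, [/\ is_submodule L, ~ zero_msub L & forall x, N x -> L x -> x = 0].
Proof.
move=> nl; apply: contrapT => H; apply: nl => L sL nzL.
apply: contrapT => H2; apply: H; exists L; split => // x Nx Lx.
apply: contrapT => nx; apply: H2; exists x; by [].
Qed.

Lemma complement (D : msub M) : lsg_vertex D ->
  exists V, [/\ lsg_vertex V, ~ msub_eq V D & large (msum V D)].
Proof.
case=> sD nzD nlD.
have sD' := sD; case: sD' => D0 DD DZ.
pose Q := fun V : msub M => is_submodule V /\ forall x, V x -> D x -> x = 0.
have [V [[sV VD] V0 Vmax]] : exists V, [/\ Q V, (forall t, t = 0 -> V t) &
     forall B, (forall t, V t -> B t) -> Q B -> forall t, B t -> V t].
  apply: zorn_max.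
  - split; last by [].
    split => //; first by move=> x y -> ->; rewrite addr0.
    by move=> r x ->; rewrite scaler0.
  - move=> F FQ Ftot [X0 FX0]; split; last first.
      by move=> x [X FX Xx]; apply: (FQ X FX).1.2.
    split.
    + by exists X0 => //; exact: (FQ X0 FX0).2 0 erefl.
    + move=> x y [X FX Xx] [Y FY Yy].
      case: (Ftot X Y FX FY) => [XY|YX].
      * exists Y => //; case: (FQ Y FY).1.1 => _ YD _; apply: YD => //; exact: XY.
      * exists X => //; case: (FQ X FX).1.1 => _ XD _; apply: XD => //; exact: YX.
    + move=> r x [X FX Xx]; exists X => //; case: (FQ X FX).1.1 => _ _ XZ; exact: XZ.
have [L [sL nzL DL]] := not_large nlD.
have sV' := sV; case: sV' => V0' VD' VZ'.
have maxsum : forall L', is_submodule L' -> (forall x, msum V D x -> L' x -> x = 0) ->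
    forall x, L' x -> V x.
  move=> L' sL' H x0 L'x0; apply: (Vmax (msum V L')).
  - by move=> t Vt; exists t, 0; split => //; split; [case: sL'|rewrite addr0].
  - split; first exact: msum_sub.
    move=> x [v [l [Vv [L'l ->]]]] Dx.
    have l0 : l = 0.
      apply: H => //; exists (- v), (v + l); split; first by rewrite -scaleN1r; exact: VZ'.
      by split => //; rewrite addKr.
    move: Dx; rewrite l0 addr0 => Dv; by rewrite (VD v Vv Dv).
  - by exists 0, x0; split => //; split => //; rewrite add0r.
exists V; split.
- split => //.
  + move=> zV; apply: nzL => x Lx; apply: (zV); apply: (maxsum L sL) => //.
    move=> y [v [d [Vv [Dd ->]]]]; rewrite (zV v Vv) add0r => Ld; exact: DL.
  + move=> lV; have [x [nx [Vx Dx]]] := lV D sD nzD; by apply: nx; apply: VD.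
- move=> e; have [x [Dx nx]] := ex_nz nzD; apply: nx; apply: VD => //; exact/e.
- move=> L' sL' nzL'; apply: contrapT => H.
  have sub : forall x, L' x -> V x.
    apply: (maxsum L' sL') => y Sy L'y; apply: contrapT => ny; apply: (H).
    by exists y.
  have [x [L'x nx]] := ex_nz nzL'; apply: (H); exists x; split => //; split => //.
  by exists x, 0; split; [exact: sub|split => //; rewrite addr0].
Qed.

Lemma ex_minimal : comultiplication_module M -> forall N : msub M, is_submodule N ->
  ~ zero_msub N -> exists S, minimal_submodule S /\ msub_le S N.
Proof.
move=> hC N sN nzN; have [x [Nx nx]] := ex_nz nzN.
pose Q := fun I : R -> Prop => is_ideal I /\ ~ I 1.
have [m [[[m0 mD mM] m1] A0m mmax]] : exists m, [/\ Q m, (forall t, t *: x = 0 -> m t) &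
     forall B, (forall t, m t -> B t) -> Q B -> forall t, B t -> m t].
  apply: zorn_max.
  - split; last by rewrite scale1r.
    split; first by rewrite scale0r.
    + by move=> a b ha hb; rewrite scalerDl ha hb addr0.
    + by move=> r a ha; rewrite -scalerA ha scaler0.
  - move=> F FQ Ftot [X0 FX0]; split; last first.
      by move=> [X FX X1]; apply: (FQ X FX).1.2.
    split.
    + by exists X0 => //; apply: (FQ X0 FX0).2; rewrite scale0r.
    + move=> a b [X FX Xa] [Y FY Yb].
      case: (Ftot X Y FX FY) => [XY|YX].
      * exists Y => //; case: (FQ Y FY).1.1 => _ YD _; apply: YD => //; exact: XY.
      * exists X => //; case: (FQ X FX).1.1 => _ XD _; apply: XD => //; exact: YX.
    + move=> r a [X FX Xa]; exists X => //; case: (FQ X FX).1.1 => _ _ XM; exact: XM.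
have mN : forall a, m a -> m (- a).
  by move=> a ma; rewrite -mulN1r; apply: mM.
have field : forall a, ~ m a -> exists s, m (s * a - 1).
  move=> a nma.
  pose J := fun t => exists m' r, m m' /\ t = m' + r * a.
  case: (pselect (J 1)) => [[m' [s [mm' e]]]|nJ1].
    exists s; have -> : s * a - 1 = - m' by rewrite e opprD addrCA subrr addr0.
    exact: mN.
  exfalso; apply: nma; apply: (mmax J) => //.
  - by move=> t mt; exists t, 0; rewrite mul0r addr0.
  - split => //; split.
    + by exists 0, 0; rewrite mul0r addr0.
    + move=> u v [m1' [r1 [h1 ->]]] [m2' [r2 [h2 ->]]].
      exists (m1' + m2'), (r1 + r2); split; first exact: mD.
      by rewrite mulrDl addrACA.
    + move=> r u [m1' [r1 [h1 ->]]]; exists (r * m1'), (r * r1); split; first exact: mM.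
      by rewrite mulrDr mulrA.
  - by exists 0, 1; rewrite mul1r add0r.
pose P := fun y : M => exists a, m a /\ y = a *: x.
have sP : is_submodule P.
  split.
  - by exists 0; rewrite scale0r.
  - move=> u v [a [ma ->]] [b [mb ->]]; exists (a + b); split; first exact: mD.
    by rewrite scalerDl.
  - move=> r u [a [ma ->]]; exists (r * a); split; first exact: mM.
    by rewrite scalerA.
have [I [_ PI]] := hC P sP.
have nPx : ~ P x.
  move=> [a [ma e]]; apply: m1.
  have h : m (1 - a) by apply: A0m; rewrite scalerBl scale1r -e subrr.
  by have := mD _ _ h ma; rewrite subrK.
have [r [Ir nrx]] : exists r, I r /\ r *: x <> 0.
  apply: contrapT => H; apply: nPx; apply/PI => r Ir; apply: contrapT => nr.
  by apply: H; exists r.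
pose y := r *: x.
have my : forall a, m a -> a *: y = 0.
  move=> a ma; rewrite /y scalerA mulrC -scalerA.
  by have := (PI (a *: x)).1 (ex_intro _ a (conj ma erefl)); apply.
exists (fun z => exists c, z = c *: y); split; last first.
  by move=> z [c ->]; rewrite /y scalerA; case: sN => _ _ NZ; apply: NZ.
split.
- split.
  + by exists 0; rewrite scale0r.
  + by move=> u v [a ->] [b ->]; exists (a + b); rewrite scalerDl.
  + by move=> c u [a ->]; exists (c * a); rewrite scalerA.
- by move=> z0; apply: nrx; apply: z0; exists 1; rewrite scale1r.
- move=> K sK KS; case: (pselect (exists z, K z /\ z <> 0)) => [[z [Kz nz]]|nK].
  + right; have [c ec] := KS z Kz.
    have nmc : ~ m c by move=> mc; apply: nz; rewrite ec my.
    have [s ms] := field c nmc.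
    have Ky : K y.
      have -> : y = s *: z.
        rewrite ec scalerA.
        have -> : s * c = (s * c - 1) + 1 by rewrite subrK.
        by rewrite scalerDl my // scale1r add0r.
      by case: sK => _ _ KZ; apply: KZ.
    move=> u; split; first exact: KS.
    by move=> [a ->]; case: sK => _ _ KZ; apply: KZ.
  + left => z Kz; apply: contrapT => nz; apply: nK; by exists z.
Qed.
End Helpers.

Import GRing.Theory.
Theorem theorem3p3 (R : comPzRingType) (M : lmodType R) :
  nonzero_module M -> comultiplication_module M -> lsg_nonnull M ->
  lsg_gamma_le M 2 /\ (Min_finite M -> lsg_gamma_eq M 2).
Proof.
move=> _ hC [N [K [vN _ _ _]]].
have part1 : lsg_gamma_le M 2.
  have vN' := vN; case: vN' => sN nzN nlN.
  have [L [sL nzL NL]] := not_large nlN.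
  have [S2 [[sS2 nzS2 minS2] S2L]] := ex_minimal hC sL nzL.
  have vS2 : lsg_vertex S2.
    split => // lS2; have [x [nx [S2x Nx]]] := lS2 N sN nzN.
    by apply: nx; apply: NL => //; apply: S2L.
  exists [:: N; S2]; split => //; split.
    by move=> X /= [<-|[<-|[]]].
  move=> V vV; have vV' := vV; case: vV' => sV nzV nlV.
  case: (pselect (msub_eq V N)) => [e|ne]; first by exists N; [left|left].
  case: (pselect (msub_eq V S2)) => [e|ne2]; first by exists S2; [right; left|left].
  case: (pselect (large (msum V N))) => [lN|nlVN]; last first.
    by exists N; [left|right; split].
  case: (pselect (large (msum V S2))) => [lS|nlVS]; last first.
    by exists S2; [right; left|right; split].
  exfalso; apply: nlV.
  have sV' := sV; case: sV' => V0 VD VZ.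
  have sS2' := sS2; case: sS2' => S0 SD SZ.
  case: (pselect (exists z, [/\ V z, S2 z & z <> 0%R])) => [[z [Vz Sz nz]]|nI].
    have sK : is_submodule (fun x => V x /\ S2 x).
      split => //; first by move=> x y [? ?] [? ?]; split; [apply: VD|apply: SD].
      by move=> r x [? ?]; split; [apply: VZ|apply: SZ].
    case: (minS2 _ sK (fun x (h : V x /\ S2 x) => h.2)) => [zK|eK].
      by exfalso; apply: nz; apply: zK.
    apply: (large_mono lS) => x [v [s [Vv [Ss ->]]]].
    by apply: VD => //; have := (eK s).2 Ss => -[].
  have [x [nx [[v [n [Vv [Nn ex]]]] S2x]]] := lN S2 sS2 nzS2.
  have [I [_ NI]] := hC N sN.
  have nNx : ~ N x by move=> Nx; apply: nx; apply: NL => //; apply: S2L.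
  have [a [Ia nax]] : exists a, I a /\ (a *: x <> 0)%R.
    apply: contrapT => H; apply: nNx; apply/NI => r Ir; apply: contrapT => nr.
    by apply: H; exists r.
  have an : (a *: n = 0)%R by apply: (NI n).1.
  exfalso; apply: nI; exists (a *: x)%R; split => //; last by apply: SZ.
  by rewrite ex scalerDr an addr0; apply: VZ.
have part2 : Min_finite M -> lsg_gamma_eq M 2.
  move=> _; split => // S [Sv Sd].
  case: S Sv Sd => [|D [|D' S]] Sv Sd //.
  - by have [X []] := Sd N vN.
  - have vD : lsg_vertex D by apply: Sv; left.
    have [V [vV nVD lVD]] := complement vD.
    have [X /= [<-|[]] [e|[_ _ _ nl]]] := Sd V vV;
      [exfalso; exact: (nVD e)|exfalso; exact: (nl lVD)].
by split.
Qed.
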